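(* Let $R$ be a process and $X=(X_1,\dots,X_m)$ a risk basis with $R(t)=\varrho((X_1,\dots,X_m)^t)$ for a mapping $\varrho$. Suppose $X$ generates the ISU decomposition $D(t)=(D_1(t),\dots,D_m(t))$ of $R(t)-R(0)$ with respect to a sequence of partitions $(\mathcal T_n(t))_n$ of $[0,t]$ with vanishing mesh. Let $\mathcal G$ be a sub-$\sigma$-algebra of $\mathcal A$. Suppose the SU decompositions $D^n(t)=(D^n_1(t),\dots,D^n_m(t))$ of $R(t)-R(0)$ with respect to $\mathcal T_n(t)$ satisfy $|D^n_i(t)|\le Y$ for all $i=1,\dots,m$ and $n\in\mathbb N$, for some integrable random variable $Y$. Then the ISU decomposition (with respect to the same sequence of partitions) of $$\widetilde R(t)=\widetilde\varrho((X_1,\dots,X_m)^t):=\mathbb E\big[\varrho((X_1,\dots,X_m)^t)\,\big|\,\mathcal G\big],$$ where $\widetilde\varrho(\cdot):=\mathbb E[\varrho(\cdot)\mid\mathcal G]$, is $$\widetilde D(t)=\big(\mathbb E[D_1(t)\mid\mathcal G],\dots,\mathbb E[D_m(t)\mid\mathcal G]\big).$$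
   Context: **Setting.** $(\Omega,\mathcal A,\mathbb P)$ is a probability space. For a process $Y$, $Y^t(s)=Y(\min(s,t))$, componentwise for tuples. **Surface.** $U(t_1,\dots,t_m)=\varrho((X_1^{t_1},\dots,X_m^{t_m}))$. **SU decomposition.** For a partition $0=t_0<\dots<t_k=t$, the SU decomposition of $R(t)-R(0)$ is $$D_i(t)=\sum_{l=0}^{k-1}\Big(U(\underbrace{t_{l+1},\dots,t_{l+1}}_{i},t_l,\dots,t_l)-U(\underbrace{t_{l+1},\dots,t_{l+1}}_{i-1},t_l,\dots,t_l)\Big),\quad i=1,\dots,m.$$ **ISU decomposition.** For partitions $\mathcal T_n(t)$ with maximal step length tending to $0$, the ISU decomposition is $D(t)$ with $D_i(t)=\operatorname{plim}_{n\to\infty}D^n_i(t)$ (limit in probability), where $D^n(t)$ are the SU decompositions with respect to $\mathcal T_n(t)$. *)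

(* Defs.v *)
From HB Require Import structures.
From mathcomp Require Import all_boot all_order all_algebra.
From mathcomp Require Import all_classical all_reals all_analysis.
Set Implicit Arguments. Unset Strict Implicit. Unset Printing Implicit Defensive.
Import Order.TTheory GRing.Theory Num.Theory.
Import numFieldNormedType.Exports.
Local Open Scope classical_set_scope.
Local Open Scope ring_scope.

(* Time vectors are 'I_m -> R, processes are R -> T -> R (time, outcome). *)

(** Surface: U(t_1,...,t_m) = rho((X_1^{t_1},...,X_m^{t_m})),
    with Y^t(s) = Y(min(s,t)). *)
Definition surface {R : realType} {T : Type} {m : nat}
  (rho : ('I_m -> R -> T -> R) -> T -> R) (X : 'I_m -> R -> T -> R)
  (tau : 'I_m -> R) : T -> R :=
  rho (fun j s => X j (Num.min s (tau j))).

Definition is_partition {R : realType} (t : R) (s : seq R) : Prop :=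
  [/\ head 1 s = 0, last 0 s = t & sorted (fun a b => a < b) s].

Definition mesh {R : realType} (s : seq R) : R :=
  \big[Num.max/0]_(l < (size s).-1) (nth 0 s l.+1 - nth 0 s l).

(** SU decomposition w.r.t. the partition s; the index i : 'I_m (0-based)
    corresponds to the paper's index i+1. *)
Definition su_dec {R : realType} {T : Type} {m : nat}
  (U : ('I_m -> R) -> T -> R) (s : seq R) (i : 'I_m) : T -> R :=
  fun w => \sum_(l < (size s).-1)
    (U (fun j => if (j <= i)%N then nth 0 s l.+1 else nth 0 s l) w
     - U (fun j => if (j < i)%N then nth 0 s l.+1 else nth 0 s l) w).

Definition conv_in_prob {d} {T : measurableType d} {R : realType}
  (P : probability T R) (Xn : nat -> T -> R) (X : T -> R) : Prop :=
  forall e : R, 0 < e ->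
    (fun n => P [set w | e < `|Xn n w - X w|]) @ \oo --> 0%E.

Definition is_sub_sigma_algebra {d} {T : measurableType d} (G : set (set T)) :=
  sigma_algebra setT G /\ G `<=` measurable.

Definition is_cond_exp {d} {T : measurableType d} {R : realType}
  (P : probability T R) (G : set (set T)) (Y Z : T -> R) : Prop :=
  [/\ P.-integrable setT (EFin \o Y),
      P.-integrable setT (EFin \o Z),
      (forall B : set R, measurable B -> G (Z @^-1` B)) &
      (forall A, G A ->
         (\int[P]_(x in A) (Z x)%:E = \int[P]_(x in A) (Y x)%:E)%E)].

(* Main.v *)
Require Import Defs.
From HB Require Import structures.
From mathcomp Require Import all_boot all_order all_algebra.
From mathcomp Require Import all_classical all_reals all_analysis.
From mathcomp Require Import measurable_realfun.
From mathcomp Require Import lra zify.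
Import Order.TTheory GRing.Theory Num.Theory.
Import numFieldNormedType.Exports.
Local Open Scope classical_set_scope.
Local Open Scope ring_scope.
Set Implicit Arguments. Unset Strict Implicit. Unset Printing Implicit Defensive.
Section CE.
Context d (T : measurableType d) (R : realType) (P : probability T R)
  (G : set (set T)) (HG : is_sub_sigma_algebra G).

Local Notation GT := (g_sigma_algebraType G).

Lemma GT_measE : (measurable : set (set GT)) = G.
Proof. exact: (sigma_algebra_id HG.1). Qed.

Lemma GmP (f : T -> R) :
  (forall B, measurable B -> G (f @^-1` B)) <-> measurable_fun setT (f : GT -> R).
Proof.
split.
- move=> h _ B mB; rewrite setTI GT_measE; exact: h.
- move=> h B mB; have := h measurableT B mB; rewrite setTI GT_measE; exact.
Qed.

Lemma mid : measurable_fun setT (idfun : T -> GT).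
Proof.
move=> _ B; rewrite GT_measE setTI => GB; exact: HG.2.
Qed.

Definition muG : set GT -> \bar R := pushforward P (idfun : T -> GT).

Let muG0 : muG set0 = 0%E.
Proof. by rewrite /muG /pushforward preimage_set0 measure0. Qed.
Let muG_ge0 A : (0 <= muG A)%E.
Proof. by rewrite /muG /pushforward; exact: measure_ge0. Qed.
Let muG_sa : semi_sigma_additive muG.
Proof.
move=> F mF tF mUF; rewrite /muG /pushforward preimage_bigcup.
apply: measure_semi_sigma_additive.
- move=> n; rewrite -[X in measurable X]setTI; exact: mid.
- apply/trivIsetP => /= i j _ _ ij; rewrite -preimage_setI.
  by move/trivIsetP : tF => /(_ _ _ _ _ ij) ->//; rewrite preimage_set0.
- by rewrite -preimage_bigcup -[X in measurable X]setTI; exact: mid.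
Qed.
HB.instance Definition _ := isMeasure.Build _ _ _ muG muG0 muG_ge0 muG_sa.
Let muG_fin : fin_num_fun muG.
Proof.
move=> A mA; apply: fin_num_measure; rewrite -[X in measurable X]setTI; exact: mid.
Qed.
HB.instance Definition _ := Measure_isFinite.Build _ _ _ muG muG_fin.


Section nuG.
Variables (f : T -> R) (intf : P.-integrable setT (EFin \o f)).

Definition nuG : set GT -> \bar R := fun A => (\int[P]_(x in A) (f x)%:E)%E.

Lemma GmT (A : set GT) : measurable A -> d.-measurable (A : set T).
Proof. rewrite GT_measE; exact: HG.2. Qed.

Let nuG0 : nuG set0 = 0%E.
Proof. by rewrite /nuG integral_set0. Qed.
Let nuG_fin A : measurable A -> nuG A \is a fin_num.
Proof. move=> mA; exact: (fin_num_measure (induced_charge intf) _ (GmT mA)). Qed.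
Let nuG_sa : semi_sigma_additive nuG.
Proof.
move=> F mF tF mUF.
exact: (@charge_semi_sigma_additive _ _ _ (induced_charge intf) F (fun n => GmT (mF n)) tF (GmT mUF)).
Qed.
HB.instance Definition _ := isCharge.Build _ _ _ nuG nuG0 nuG_fin nuG_sa.

Lemma nuG_dom : nuG `<< muG.
Proof.
apply/null_content_dominatesP => A mA muA0.
rewrite /nuG null_set_integral //; first exact: GmT.
have /integrableP[/measurable_EFinP mf _] := intf.
apply/measurable_EFinP; exact: (measurable_funTS mf).
Qed.

Lemma cond_exp_exists : exists Z, is_cond_exp P G f Z.
Proof.
pose RN := Radon_Nikodym nuG muG.
have RNfin x : RN x \is a fin_num by apply: Radon_Nikodym_fin_num; exact: nuG_dom.
have RNint : muG.-integrable setT RN by apply: Radon_Nikodym_integrable; exact: nuG_dom.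
have /integrableP[mRN _] := RNint.
have EZ : EFin \o (fun x => fine (RN x)) = RN by apply/funext => x /=; rewrite fineK.
have mRNT : measurable_fun setT (RN : T -> \bar R).
  exact: (measurableT_comp mRN mid).
have RNintT : P.-integrable setT (RN : T -> \bar R).
  apply/integrableP; split => //.
  have := RNint => /integrableP[_].
  rewrite /muG ge0_integral_pushforward //; first exact: mid.
  exact: measurableT_comp.
exists (fun x => fine (RN x)); rewrite /is_cond_exp; split => //.
- by rewrite EZ.
- apply/GmP; exact: (measurableT_comp (fine_measurable measurableT) mRN).
- move=> A GA.
  transitivity (\int[P]_(x in A) RN x)%E; first by apply: eq_integral => x _; rewrite fineK.
  have mA : measurable (A : set GT) by rewrite GT_measE.
  have -> : (\int[P]_(x in A) RN x)%E = (\int[muG]_(x in A) RN x)%E.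
    rewrite /muG integral_pushforward //; first exact: mid.
    apply: integrableS RNintT => //; exact: GmT.
  rewrite -Radon_Nikodym_integral //; exact: nuG_dom.
Qed.
End nuG.

Lemma GmT' (A : set T) : G A -> d.-measurable A.
Proof. exact: HG.2. Qed.

Lemma ce0 : is_cond_exp P G (fun _ => 0) (fun _ => 0).
Proof.
have h : P.-integrable setT (EFin \o (fun _ : T => (0:R))).
  by have := @integrable0 _ T R P setT.
rewrite /is_cond_exp; split => //.
by apply/GmP; exact: measurable_cst.
Qed.

Lemma ceD (W1 W2 Z1 Z2 : T -> R) : is_cond_exp P G W1 Z1 -> is_cond_exp P G W2 Z2 ->
  is_cond_exp P G (fun w => W1 w + W2 w) (fun w => Z1 w + Z2 w).
Proof.
move=> [iW1 iZ1 gZ1 eZ1] [iW2 iZ2 gZ2 eZ2].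
have E (f g : T -> R) : EFin \o (fun w => f w + g w) = ((EFin \o f) \+ (EFin \o g))%E.
  by apply/funext => x /=; rewrite EFinD.
rewrite /is_cond_exp !E; split.
- exact: integrableD.
- exact: integrableD.
- apply/GmP; apply: measurable_funD; exact/GmP.
- move=> A GA; have mA := GmT' GA.
  rewrite [LHS](eq_integral (fun x => (Z1 x)%:E + (Z2 x)%:E)%E); last by move=> x _; rewrite EFinD.
  rewrite [RHS](eq_integral (fun x => (W1 x)%:E + (W2 x)%:E)%E); last by move=> x _; rewrite EFinD.
  rewrite (integralD mA); [|exact: integrableS iZ1|exact: integrableS iZ2].
  rewrite (integralD mA); [|exact: integrableS iW1|exact: integrableS iW2].
  by rewrite eZ1 // eZ2.
Qed.

Lemma ceB (W1 W2 Z1 Z2 : T -> R) : is_cond_exp P G W1 Z1 -> is_cond_exp P G W2 Z2 ->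
  is_cond_exp P G (fun w => W1 w - W2 w) (fun w => Z1 w - Z2 w).
Proof.
move=> [iW1 iZ1 gZ1 eZ1] [iW2 iZ2 gZ2 eZ2].
have E (f g : T -> R) : EFin \o (fun w => f w - g w) = (fun x => (EFin \o f) x - (EFin \o g) x)%E.
  by apply/funext => x /=; rewrite EFinB.
rewrite /is_cond_exp !E; split.
- exact: integrableB.
- exact: integrableB.
- apply/GmP; apply: measurable_funB; exact/GmP.
- move=> A GA; have mA := GmT' GA.
  rewrite [LHS](eq_integral (fun x => (Z1 x)%:E - (Z2 x)%:E)%E); last by move=> x _; rewrite EFinB.
  rewrite [RHS](eq_integral (fun x => (W1 x)%:E - (W2 x)%:E)%E); last by move=> x _; rewrite EFinB.
  rewrite (integralB mA); [|exact: integrableS iZ1|exact: integrableS iZ2].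
  rewrite (integralB mA); [|exact: integrableS iW1|exact: integrableS iW2].
  by rewrite eZ1 // eZ2.
Qed.

Lemma ceN (W Z : T -> R) : is_cond_exp P G W Z ->
  is_cond_exp P G (fun w => - W w) (fun w => - Z w).
Proof.
move=> h; have := ceB ce0 h.
have E (f : T -> R) : (fun w => 0 - f w) = (fun w => - f w).
  by apply/funext => x; rewrite sub0r.
by rewrite !E.
Qed.

Lemma ce_sum n (W Z : 'I_n -> T -> R) : (forall l, is_cond_exp P G (W l) (Z l)) ->
  is_cond_exp P G (fun w => \sum_(l < n) W l w) (fun w => \sum_(l < n) Z l w).
Proof.
elim: n W Z => [|n IH] W Z h.
  have E (F : 'I_0 -> T -> R) : (fun w => \sum_(l < 0) F l w) = (fun _ => 0).
    by apply/funext => x; rewrite big_ord0.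
  by rewrite !E; exact: ce0.
have E (F : 'I_n.+1 -> T -> R) : (fun w => \sum_(l < n.+1) F l w) =
    (fun w => \sum_(l < n) F (widen_ord (leqnSn n) l) w + F ord_max w).
  by apply/funext => x; rewrite big_ord_recr.
rewrite !E; apply: ceD; last exact: h.
exact: (IH (fun l => W (widen_ord (leqnSn n) l)) (fun l => Z (widen_ord (leqnSn n) l))).
Qed.

Lemma int_splitC (A : set T) (f : T -> R) : d.-measurable A -> measurable_fun setT f ->
  (\int[P]_x `|(f x)%:E| = \int[P]_(x in A) `|(f x)%:E| + \int[P]_(x in ~` A) `|(f x)%:E|)%E.
Proof.
move=> mA mf.
rewrite -ge0_integral_setU //; first by rewrite setUCr.
- exact: measurableC.
- rewrite setUCr; apply: measurableT_comp => //; exact/measurable_EFinP.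
- by rewrite /disj_set setICr.
Qed.

Lemma ce_L1 (W Z : T -> R) : is_cond_exp P G W Z ->
  (\int[P]_x `|(Z x)%:E| <= \int[P]_x `|(W x)%:E|)%E.
Proof.
move=> h; have [iW iZ gZ eZ] := h; have [_ _ _ eN] := ceN h.
have mW : measurable_fun setT W by apply/measurable_EFinP; have /integrableP[] := iW.
have mZ : measurable_fun setT Z by apply/measurable_EFinP; have /integrableP[] := iZ.
pose A := Z @^-1` `[0%R, +oo[.
have GA : G A by apply: gZ; exact: measurable_itv.
have GAc : G (~` A).
  by case: HG.1 => _ hC _; rewrite -setTD; exact: hC.
have mA := GmT' GA; have mAc := GmT' GAc.
rewrite (int_splitC mA mZ) (int_splitC mA mW).
have -> : (\int[P]_(x in A) `|(Z x)%:E| = \int[P]_(x in A) (Z x)%:E)%E.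
  apply: eq_integral => x; rewrite inE /A /= in_itv /= andbT => Zx.
  by rewrite ger0_norm.
have -> : (\int[P]_(x in ~` A) `|(Z x)%:E| = \int[P]_(x in ~` A) (- Z x)%:E)%E.
  apply: eq_integral => x; rewrite inE /A /= in_itv /= andbT => /negP.
  by rewrite -ltNge => Zx; rewrite ltr0_norm.
rewrite eZ // eN //; apply: leeD.
- apply: le_trans (lee_abs _) _; apply: le_abse_integral => //.
  apply/measurable_EFinP; exact: measurable_funTS.
- apply: le_trans (lee_abs _) _.
  apply: le_trans (le_abse_integral _ _ _) _ => //.
    apply/measurable_EFinP; apply: measurable_funTS; exact: measurableT_comp.
  by apply: ge0_le_integral => //; [apply: measurableT_comp => //; apply/measurable_EFinP;
     apply: measurable_funTS; exact: measurableT_comp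
    |apply: measurableT_comp => //; apply/measurable_EFinP; exact: measurable_funTS
    |move=> x _; rewrite !abse_EFin normrN].
Qed.

Lemma markov_abs (f : T -> R) (e : R) : (0 < e)%R -> measurable_fun setT f ->
  (e%:E * P [set w | (e < `|f w|)%R] <= \int[P]_x `|(f x)%:E|)%E.
Proof.
move=> e0 mf.
have mS : d.-measurable [set w | (e < `|f w|)%R].
  have -> : [set w | (e < `|f w|)%R] = (Num.norm \o f) @^-1` `]e, +oo[.
    by apply/seteqP; split => x /=; rewrite in_itv /= andbT.
  rewrite -[X in measurable X]setTI; apply: (measurableT_comp (@normr_measurable R setT) mf) => //.
have mfa : measurable_fun setT (fun x => `|(f x)%:E|%E).
  apply: measurableT_comp => //; exact/measurable_EFinP.
rewrite -(integral_cst P mS).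
apply: (@le_trans _ _ (\int[P]_(x in [set w | (e < `|f w|)%R]) `|(f x)%:E|)%E).
  apply: ge0_le_integral => //.
  - by move=> x _; rewrite /cst lee_fin ltW.
  - exact: measurable_funTS.
  - by move=> x /= ex; rewrite /cst lee_fin ltW.
apply: ge0_subset_integral => //.
Qed.
Lemma mset_gt (f : T -> R) (e : R) : measurable_fun setT f ->
  d.-measurable [set w | (e < `|f w|)%R].
Proof.
move=> mf.
have -> : [set w | (e < `|f w|)%R] = (Num.norm \o f) @^-1` `]e, +oo[.
  by apply/seteqP; split => x /=; rewrite in_itv /= andbT.
rewrite -[X in measurable X]setTI; apply: (measurableT_comp (@normr_measurable R setT) mf) => //.
Qed.

Lemma L1_conv (S : nat -> T -> R) (D Z : T -> R) (N : set T) :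
  (forall n, measurable_fun setT (S n)) -> measurable_fun setT D ->
  P.-integrable setT (EFin \o Z) -> (forall w, 0 <= Z w) ->
  d.-measurable N -> P N = 0%E -> (forall n w, ~ N w -> `|S n w - D w| <= Z w) ->
  conv_in_prob P S D ->
  forall eps, 0 < eps -> \forall n \near \oo,
    (\int[P]_x `|(S n x - D x)%:E| <= eps%:E)%E.
Proof.
move=> mS mD iZ Z0 mN PN0 hSZ cSD eps eps0.
pose eta := eps / 2.
have eta0 : 0 < eta by rewrite /eta divr_gt0.
have etaE : eta + eta = eps by rewrite /eta; lra.
pose nu := induced_charge iZ.
have nuP : nu `<< P.
  apply/null_content_dominatesP => A mA PA0.
  rewrite /nu /induced_charge null_set_integral //.
  apply: measurable_funTS; by have /integrableP[] := iZ.
have [Pp [Nn nuPN]] := Hahn_decomposition nu.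
have [del [del0 hdel]] := charge_variation_continuous nuPN nuP eta0.
have intsmall A : d.-measurable A -> (P A < del%:E)%E ->
    (\int[P]_(x in A) (Z x)%:E <= eta%:E)%E.
  move=> mA PA; apply: ltW; apply: le_lt_trans (hdel A mA PA).
  apply: le_trans (abse_charge_variation nuPN mA).
  exact: lee_abs.
have := cSD eta eta0; move/fine_cvgP => [finev cv].
move/cvgrPdist_lt : cv => /(_ del del0) ev.
near=> n.
have fin : P [set w | (eta < `|S n w - D w|)%R] \is a fin_num by near: n; exact: finev.
have h : `|0 - fine (P [set w | (eta < `|S n w - D w|)%R])| < del by near: n; exact: ev.
have mSD : measurable_fun setT (fun x => S n x - D x) by exact: measurable_funB.
set An := [set w | (eta < `|S n w - D w|)%R] in fin h.
have mAn : d.-measurable An by exact: mset_gt.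
have PAn : (P An < del%:E)%E.
  rewrite -(fineK fin) lte_fin.
  rewrite sub0r normrN in h.
  by apply: le_lt_trans h; exact: ler_norm.
rewrite (int_splitC mAn mSD) -etaE EFinD; apply: leeD.
  apply: le_trans (intsmall _ mAn PAn).
  apply: ae_ge0_le_integral => //.
  - apply: measurable_funTS; apply: measurableT_comp => //; exact/measurable_EFinP.
  - by move=> x _; rewrite lee_fin.
  - apply/measurable_EFinP; apply: measurable_funTS; by have /integrableP[/measurable_EFinP] := iZ.
  - exists N; split => // x /= hx; apply: contrapT => Nx; apply: hx => _.
    by rewrite lee_fin; exact: hSZ.
apply: (@le_trans _ _ (\int[P]_(x in ~` An) (cst eta%:E) x)%E).
  apply: ge0_le_integral => //.
  - exact: measurableC.
  - apply: measurable_funTS; apply: measurableT_comp => //; exact/measurable_EFinP.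
  - by move=> x /= hx; rewrite /cst lee_fin leNgt; apply/negP.
rewrite integral_cst; last exact: measurableC.
rewrite -[X in (_ <= X)%E]mule1; apply: lee_wpmul2l; first by rewrite lee_fin ltW.
apply: probability_le1; exact: measurableC.
Unshelve. all: by end_near.
Qed.

Lemma ae_bound (S : nat -> T -> R) (D Y : T -> R) :
  (forall n, measurable_fun setT (S n)) -> measurable_fun setT D ->
  measurable_fun setT Y -> conv_in_prob P S D -> (forall n w, `|S n w| <= Y w) ->
  d.-measurable [set w | (1 < `|D w| - Y w)%R] /\
  P [set w | (1 < `|D w| - Y w)%R] = 0%E.
Proof.
move=> mS mD mY cSD hY.
have mN : d.-measurable [set w | (1 < `|D w| - Y w)%R].
  have -> : [set w | (1 < `|D w| - Y w)%R] = (fun w => `|D w| - Y w) @^-1` `]1, +oo[.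
    by apply/seteqP; split => x /=; rewrite in_itv /= andbT.
  rewrite -[X in measurable X]setTI.
  apply: (measurable_funB (measurableT_comp (@normr_measurable R setT) mD) mY) => //.
split => //.
have le n : (P [set w | (1 < `|D w| - Y w)%R] <= P [set w | (1 < `|S n w - D w|)%R])%E.
  apply: le_measure; rewrite ?inE //; first by apply: mset_gt; exact: measurable_funB.
  move=> x /= h1.
  have h2 : `|D x| <= `|S n x| + `|S n x - D x|.
    have := ler_normD (S n x) (D x - S n x).
    by rewrite addrC subrK distrC.
  have h3 := hY n x.
  lra.
have cu := cSD 1 ltr01.
have h : (P [set w | (1 < `|D w| - Y w)%R] <=
    lim ((fun n => P [set w | (1 < `|S n w - D w|)%R]) n @[n --> \oo]))%E.
  apply: lime_ge; first exact: cvgP cu.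
  exact: nearW.
rewrite (cvg_lim _ cu) // in h.
by apply/eqP; rewrite eq_le h measure_ge0.
Qed.

End CE.

Lemma partition_in (R : realType) (t : R) (s : seq R) k :
  is_partition t s -> (k < size s)%N -> 0 <= nth 0 s k <= t.
Proof.
case=> hh hl hs ks.
have s0 : (0 < size s)%N by case: s hh {hl hs ks} => //= h; move: (@oner_neq0 R); rewrite h eqxx.
have hs' : sorted (fun a b => a <= b) s.
  by apply: sub_sorted hs => a b /ltW.
have tr : transitive (fun a b : R => a <= b) by move=> ? ? ?; exact: le_trans.
have rf : reflexive (fun a b : R => a <= b) by move=> ?.
have := sorted_leq_nth tr rf 0 hs'.
move=> H; apply/andP; split.
  have h0 : nth 0 s 0 = 0 by case: s hh {hl hs ks s0 hs' H} => //.
  by rewrite -[X in X <= _]h0; apply: H; rewrite ?inE.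
rewrite -hl -nth_last; apply: H; rewrite ?inE //.
  by rewrite prednK.
by rewrite -ltnS prednK.
Qed.


Unset Implicit Arguments. Set Strict Implicit.

Theorem lemma5p3 (d : measure_display) (T : measurableType d) (R : realType)
  (P : probability T R) (m : nat)
  (X : 'I_m -> R -> T -> R) (rho : ('I_m -> R -> T -> R) -> T -> R)
  (Rp : R -> T -> R) (t : R) (Tn : nat -> seq R)
  (D : 'I_m -> T -> R) (G : set (set T)) (Y : T -> R)
  (Ut : ('I_m -> R) -> T -> R) :
  (forall s, Rp s = rho (fun j u => X j (Num.min u s))) ->
  0 <= t ->
  (forall n, is_partition t (Tn n)) ->
  (fun n => mesh (Tn n)) @ \oo --> (0 : R) ->
  (forall i, measurable_fun setT (D i)) ->
  (forall i, conv_in_prob P (fun n => su_dec (surface rho X) (Tn n) i) (D i)) ->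
  is_sub_sigma_algebra G ->
  P.-integrable setT (EFin \o Y) ->
  (forall i n w, `|su_dec (surface rho X) (Tn n) i w| <= Y w) ->
  (forall tau : 'I_m -> R, (forall j, 0 <= tau j <= t) ->
     is_cond_exp P G (surface rho X tau) (Ut tau)) ->
  (exists Dt : 'I_m -> T -> R, forall i, is_cond_exp P G (D i) (Dt i)) /\
  (forall Dt : 'I_m -> T -> R, (forall i, is_cond_exp P G (D i) (Dt i)) ->
     forall i, conv_in_prob P (fun n => su_dec Ut (Tn n) i) (Dt i)).
Proof.
move=> _ t0 hpart _ mD cD HG iY hY hU.
pose S n i := su_dec (surface rho X) (Tn n) i.
pose V n i := su_dec Ut (Tn n) i.
have hSV i n : is_cond_exp P G (S n i) (V n i).
  rewrite /S /V /su_dec.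
  apply: (ce_sum HG (W := fun l w => surface rho X (fun j => if (j <= i)%N then nth 0 (Tn n) l.+1 else nth 0 (Tn n) l) w - surface rho X (fun j => if (j < i)%N then nth 0 (Tn n) l.+1 else nth 0 (Tn n) l) w)
     (Z := fun l w => Ut (fun j => if (j <= i)%N then nth 0 (Tn n) l.+1 else nth 0 (Tn n) l) w - Ut (fun j => if (j < i)%N then nth 0 (Tn n) l.+1 else nth 0 (Tn n) l) w)).
  move=> l.
  have l1 : (l.+1 < size (Tn n))%N.
    by have := ltn_ord l; lia.
  have l0 : (l < size (Tn n))%N by apply: ltn_trans l1.
  apply: (ceB HG); apply: hU => j; case: ifP => _; exact: partition_in (hpart n) _.
have mY : measurable_fun setT Y by apply/measurable_EFinP; have /integrableP[] := iY.
have mS i n : measurable_fun setT (S n i).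
  by have [/integrableP[/measurable_EFinP h _] _ _ _] := hSV i n.
have Y0 (i : 'I_m) w : 0 <= Y w.
  have := hY i 0%N w; apply: le_trans; exact: normr_ge0.
have bnd i := ae_bound (S := fun n => S n i) (mS i) (mD i) mY (cD i) (hY i).
pose Z w := Y w + Y w + 1.
have iZ : P.-integrable setT (EFin \o Z).
  have -> : EFin \o Z = ((EFin \o Y) \+ (EFin \o Y) \+ (EFin \o cst 1%R))%E.
    by apply/funext => w /=; rewrite /Z !EFinD.
  apply: integrableD => //; first exact: integrableD.
  exact: finite_measure_integrable_cst.
have hSZ i n w : ~ [set w | (1 < `|D i w| - Y w)%R] w -> `|S n i w - D i w| <= Z w.
  move=> /negP; rewrite -leNgt => h1.
  have h2 := ler_normB (S n i w) (D i w).
  have h3 := hY i n w.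
  rewrite /Z; lra.
have intD i : P.-integrable setT (EFin \o D i).
  have [mN PN] := bnd i.
  apply/integrableP; split; first exact/measurable_EFinP.
  apply: (@le_lt_trans _ _ (\int[P]_x (Z x)%:E)%E).
    apply: ae_ge0_le_integral => //.
    - apply: measurableT_comp => //; exact/measurable_EFinP.
    - by move=> x _; rewrite lee_fin /Z; have := Y0 i x; lra.
    - by apply/measurable_EFinP; have /integrableP[/measurable_EFinP] := iZ.
    - exists [set w | (1 < `|D i w| - Y w)%R]; split => // x /= hx.
      apply: contrapT => Nx; apply: hx => _.
      rewrite lee_fin; move/negP: Nx; rewrite -leNgt /Z => h1; have := Y0 i x; lra.
  have /integrableP[_ h] := iZ.
  apply: le_lt_trans h; apply: ge0_le_integral => //.
  - by move=> x _; rewrite lee_fin /Z; have := Y0 i x; lra.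
  - by apply/measurable_EFinP; have /integrableP[/measurable_EFinP] := iZ.
  - apply: measurableT_comp => //; by have /integrableP[] := iZ.
  - by move=> x _; exact: lee_abs.
split.
  have H i : exists Z0, is_cond_exp P G (D i) Z0 := cond_exp_exists HG (intD i).
  have [f hf] := choice H; by exists f.
move=> Dt hDt i e e0.
have hW n := ceB HG (hSV i n) (hDt i).
have mW n : measurable_fun setT (fun w => V n i w - Dt i w).
  by have [_ /integrableP[/measurable_EFinP h _] _ _] := hW n.
apply/fine_cvgP; split.
  apply: nearW => n; apply: fin_num_measure; exact: (mset_gt e (mW n)).
apply/cvgrPdist_le => eta eta0.
have [mN PN] := bnd i.
have Z0 w : 0 <= Z w by rewrite /Z; have := Y0 i w; lra.
have L := L1_conv (S := fun n => S n i) (mS i) (mD i) iZ Z0 mN PN (hSZ i) (cD i) (mulr_gt0 e0 eta0).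
near=> n.
have hL : (\int[P]_x `|(S n i x - D i x)%:E| <= (e * eta)%:E)%E by near: n; exact: L.
have hM := markov_abs P e0 (mW n).
have hC := ce_L1 HG (hW n).
have fin : P [set w | (e < `|V n i w - Dt i w|)%R] \is a fin_num.
  apply: fin_num_measure; exact: (mset_gt e (mW n)).
have h := le_trans hM (le_trans hC hL).
rewrite -(fineK fin) -EFinM lee_fin in h.
rewrite sub0r normrN ger0_norm; last by apply: fine_ge0; exact: measure_ge0.
rewrite /= -(ler_pM2l e0); exact: h.
Unshelve. all: by end_near.
Qed.
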